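(* For all types $A$ and $B$: $A \simeq B$ holds if and only if there exist types $A'$ and $B'$ such that $A \equiv A'$, $A' \sim B'$ and $B' \equiv B$.
   Context: Types and rows share one grammar: $A,B,C,\rho ::= X \mid \alpha \mid \star \mid \iota \mid A\to B \mid \forall X{:}K.\,A \mid [\rho] \mid \langle\rho\rangle \mid \cdot \mid \ell{:}A;\rho$, where $X$ ranges over type variables (bound by $\forall$), $\alpha$ over type names, $\star$ is the dynamic type (also serving as the dynamic row), $\iota$ over base types, $[\rho]$ and $\langle\rho\rangle$ are record and variant types, $\cdot$ is the empty row, $\ell$ ranges over labels, and $K\in\{\mathsf T,\mathsf R\}$ is a kind. Types are identified up to renaming of bound variables; $\mathit{ftv}(A)$ is the set of free type variables. Row matching $\rho \triangleright_\ell A,\rho'$ is defined by: $(\ell{:}A;\rho)\triangleright_\ell A,\rho$; if $\ell'\neq\ell$ and $\rho\triangleright_\ell A,\rho'$ then $(\ell'{:}B;\rho)\triangleright_\ell A,(\ell'{:}B;\rho')$; and $\star\triangleright_\ell \star,\star$. $\mathbf{QPoly}(A)$ holds iff $A$ is not of the form $\forall X{:}K.\,B$ and $\star$ occurs in $A$. Row concatenation $\rho_1\odot\rho_2$ is defined only when $\rho_1=\ell_1{:}A_1;\dots;\ell_n{:}A_n;\cdot$, and then equals $\ell_1{:}A_1;\dots;\ell_n{:}A_n;\rho_2$. $\mathit{dom}(\rho)$ is the set of labels in the top-level label prefix of $\rho$. A row $\rho$ ends with $\star$ if $\rho=\rho'\odot\star$ for some $\rho'$. Type equivalence $\equiv$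 is the least equivalence relation that is a congruence for $\to$, $\forall X{:}K.\,-$, $[-]$, $\langle-\rangle$ and $\ell{:}-;-$, and contains $\ell{:}A;\ell'{:}B;\rho \equiv \ell'{:}B;\ell{:}A;\rho$ whenever $\ell\neq\ell'$. Consistency $\simeq$ is defined inductively: $A\simeq A$; $\star\simeq A$; $A\simeq\star$; $A_1\to A_2\simeq B_1\to B_2$ if $A_1\simeq B_1$ and $A_2\simeq B_2$; $\forall X{:}K.A\simeq\forall X{:}K.B$ if $A\simeq B$; $\forall X{:}K.A\simeq B$ if $\mathbf{QPoly}(B)$, $X\notin\mathit{ftv}(B)$ and $A\simeq B$; $A\simeq\forall X{:}K.B$ if $\mathbf{QPoly}(A)$, $X\notin\mathit{ftv}(A)$ and $A\simeq B$; $[\rho_1]\simeq[\rho_2]$ and $\langle\rho_1\rangle\simeq\langle\rho_2\rangle$ if $\rho_1\simeq\rho_2$; $\ell{:}A;\rho_1\simeq B$ if $B\triangleright_\ell B',\rho_2$, $A\simeq B'$ and $\rho_1\simeq\rho_2$; $A\simeq \ell{:}B;\rho_2$ if $A\triangleright_\ell A',\rho_1$, $A'\simeq B$ and $\rho_1\simeq\rho_2$. The relation $\sim$ is defined inductively by the same rules as $\simeq$ for reflexivity, $\star$ on either side, $\to$, $\forall$ (all three $\forall$ rules, with $\sim$ in place of $\simeq$), records and variants, together with: $\ell{:}A;\rho_1\sim\ell{:}B;\rho_2$ if $A\sim B$ and $\rho_1\sim\rho_2$; $\ell{:}A;\rho_1\sim\rho_2$ if $\ell\notin\mathit{dom}(\rho_2)$,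 $\rho_2$ ends with $\star$ and $\rho_1\sim\rho_2$; $\rho_1\sim\ell{:}B;\rho_2$ if $\ell\notin\mathit{dom}(\rho_1)$, $\rho_1$ ends with $\star$ and $\rho_1\sim\rho_2$. *)

(* Defs.v *)
(* Types/rows of the gradual row-polymorphic calculus,
   with bound type variables X represented by de Bruijn indices, so that
   types are identified up to renaming of bound variables by construction. *)
From Stdlib Require Import List Arith.

Inductive kind : Type := KT | KR.

Definition label := nat.

Inductive ty : Type :=
  | TVar  : nat -> ty
  | TName : nat -> ty
  | TDyn  : ty
  | TBase : nat -> ty
  | TArr  : ty -> ty -> ty
  | TAll  : kind -> ty -> ty
  | TRec  : ty -> ty
  | TVnt  : ty -> ty
  | TNil  : ty
  | TCons : label -> ty -> ty -> ty.

Fixpoint lift (c : nat) (A : ty) : ty :=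
  match A with
  | TVar n => if Nat.leb c n then TVar (S n) else TVar n
  | TName a => TName a
  | TDyn => TDyn
  | TBase i => TBase i
  | TArr A1 A2 => TArr (lift c A1) (lift c A2)
  | TAll K A1 => TAll K (lift (S c) A1)
  | TRec r => TRec (lift c r)
  | TVnt r => TVnt (lift c r)
  | TNil => TNil
  | TCons l A1 r => TCons l (lift c A1) (lift c r)
  end.

Fixpoint dyn_occurs (A : ty) : Prop :=
  match A with
  | TDyn => True
  | TArr A1 A2 => dyn_occurs A1 \/ dyn_occurs A2
  | TAll _ A1 => dyn_occurs A1
  | TRec r | TVnt r => dyn_occurs r
  | TCons _ A1 r => dyn_occurs A1 \/ dyn_occurs r
  | _ => False
  end.

Definition QPoly (A : ty) : Prop :=
  (forall K B, A <> TAll K B) /\ dyn_occurs A.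

Inductive rmatch : ty -> label -> ty -> ty -> Prop :=
  | rm_head : forall l A r, rmatch (TCons l A r) l A r
  | rm_skip : forall l l' A B r r', l' <> l -> rmatch r l A r' ->
      rmatch (TCons l' B r) l A (TCons l' B r')
  | rm_dyn : forall l, rmatch TDyn l TDyn TDyn.

Fixpoint rdom (r : ty) : list label :=
  match r with
  | TCons l _ r' => l :: rdom r'
  | _ => nil
  end.

Fixpoint ends_dyn (r : ty) : Prop :=
  match r with
  | TDyn => True
  | TCons _ _ r' => ends_dyn r'
  | _ => False
  end.

Inductive tequiv : ty -> ty -> Prop :=
  | eq_refl_ : forall A, tequiv A A
  | eq_sym_ : forall A B, tequiv A B -> tequiv B A
  | eq_trans_ : forall A B C, tequiv A B -> tequiv B C -> tequiv A C
  | eq_arr : forall A1 A2 B1 B2, tequiv A1 B1 -> tequiv A2 B2 ->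
      tequiv (TArr A1 A2) (TArr B1 B2)
  | eq_all : forall K A B, tequiv A B -> tequiv (TAll K A) (TAll K B)
  | eq_rec : forall r1 r2, tequiv r1 r2 -> tequiv (TRec r1) (TRec r2)
  | eq_vnt : forall r1 r2, tequiv r1 r2 -> tequiv (TVnt r1) (TVnt r2)
  | eq_cons : forall l A B r1 r2, tequiv A B -> tequiv r1 r2 ->
      tequiv (TCons l A r1) (TCons l B r2)
  | eq_swap : forall l l' A B r, l <> l' ->
      tequiv (TCons l A (TCons l' B r)) (TCons l' B (TCons l A r)).

Inductive consistent : ty -> ty -> Prop :=
  | c_refl : forall A, consistent A A
  | c_dynL : forall A, consistent TDyn A
  | c_dynR : forall A, consistent A TDyn
  | c_arr : forall A1 A2 B1 B2, consistent A1 B1 -> consistent A2 B2 ->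
      consistent (TArr A1 A2) (TArr B1 B2)
  | c_all : forall K A B, consistent A B -> consistent (TAll K A) (TAll K B)
  | c_allL : forall K A B, QPoly B -> consistent A (lift 0 B) ->
      consistent (TAll K A) B
  | c_allR : forall K A B, QPoly A -> consistent (lift 0 A) B ->
      consistent A (TAll K B)
  | c_rec : forall r1 r2, consistent r1 r2 -> consistent (TRec r1) (TRec r2)
  | c_vnt : forall r1 r2, consistent r1 r2 -> consistent (TVnt r1) (TVnt r2)
  | c_consL : forall l A r1 B B' r2, rmatch B l B' r2 ->
      consistent A B' -> consistent r1 r2 -> consistent (TCons l A r1) B
  | c_consR : forall l A A' r1 B r2, rmatch A l A' r1 ->
      consistent A' B -> consistent r1 r2 -> consistent A (TCons l B r2).

Inductive sim : ty -> ty -> Prop :=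
  | s_refl : forall A, sim A A
  | s_dynL : forall A, sim TDyn A
  | s_dynR : forall A, sim A TDyn
  | s_arr : forall A1 A2 B1 B2, sim A1 B1 -> sim A2 B2 ->
      sim (TArr A1 A2) (TArr B1 B2)
  | s_all : forall K A B, sim A B -> sim (TAll K A) (TAll K B)
  | s_allL : forall K A B, QPoly B -> sim A (lift 0 B) -> sim (TAll K A) B
  | s_allR : forall K A B, QPoly A -> sim (lift 0 A) B -> sim A (TAll K B)
  | s_rec : forall r1 r2, sim r1 r2 -> sim (TRec r1) (TRec r2)
  | s_vnt : forall r1 r2, sim r1 r2 -> sim (TVnt r1) (TVnt r2)
  | s_cons : forall l A B r1 r2, sim A B -> sim r1 r2 ->
      sim (TCons l A r1) (TCons l B r2)
  | s_consL : forall l A r1 r2, ~ In l (rdom r2) -> ends_dyn r2 ->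
      sim r1 r2 -> sim (TCons l A r1) r2
  | s_consR : forall l B r1 r2, ~ In l (rdom r1) -> ends_dyn r1 ->
      sim r1 r2 -> sim r1 (TCons l B r2).

(* Main.v *)
Require Import Defs.
From Stdlib Require Import List Arith Lia.

Fixpoint tsize (A : ty) : nat :=
  match A with
  | TArr a b => S (tsize a + tsize b)
  | TAll _ a => S (tsize a)
  | TRec r | TVnt r => S (tsize r)
  | TCons _ a r => S (tsize a + tsize r)
  | _ => 1
  end.

Lemma tsize_pos : forall A, 1 <= tsize A.
Proof. destruct A; simpl; lia. Qed.

Lemma rmatch_size : forall X l A r, rmatch X l A r -> tsize r <= tsize X.
Proof. induction 1; simpl; lia. Qed.

Lemma rcomm : forall B l B' r2, rmatch B l B' r2 -> forall l' C' r3,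
  rmatch r2 l' C' r3 -> l <> l' ->
  exists r4, rmatch B l' C' r4 /\ rmatch r4 l B' r3.
Proof.
  induction 1; intros l1 C' r3 H2 Hne.
  - exists (TCons l A r3). split; [constructor; auto | constructor].
  - inversion H2; subst.
    + exists r. split; [constructor | auto].
    + destruct (IHrmatch _ _ _ H9 Hne) as [r4 [Ha Hb]].
      exists (TCons l' B r4). split; constructor; auto.
  - inversion H2; subst. exists TDyn. split; constructor.
Qed.

Lemma G : forall n X Y, tsize X + tsize Y <= n -> forall l X' t Y' s,
  rmatch X l X' t -> rmatch Y l Y' s -> consistent X' Y' -> consistent t s ->
  consistent X Y.
Proof.
  induction n; intros X Y Hn l X' t Y' s HX HY HXY Hts.
  - pose proof (tsize_pos X); lia.
  - inversion HX; subst.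
    + eapply c_consL; eauto.
    + inversion HY; subst.
      * eapply c_consR; eauto.
      * rename H into Ha, H0 into HX1, H1 into Hb, H2 into HY1.
        inversion Hts; subst.
        -- eapply c_consL; [constructor | apply c_refl |].
           eapply IHn; [| exact HX1 | exact HY1 | exact HXY | apply c_refl].
           simpl in Hn; lia.
        -- rename H2 into Hm, H4 into HP, H5 into Hu.
           destruct (rcomm _ _ _ _ HY _ _ _ Hm (fun e => Ha (eq_sym e))) as [u' [Hu1 Hu2]].
           eapply c_consL; [exact Hu1 | exact HP |].
           eapply IHn; [| exact HX1 | exact Hu2 | exact HXY | exact Hu].
           pose proof (rmatch_size _ _ _ _ Hu1). simpl in *; lia.
        -- rename H3 into Hm, H4 into HQ, H5 into Hv.
           destruct (rcomm _ _ _ _ HX _ _ _ Hm (fun e => Hb (eq_sym e))) as [v' [Hv1 Hv2]].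
           eapply c_consR; [exact Hv1 | exact HQ |].
           eapply IHn; [| exact Hv2 | exact HY1 | exact HXY | exact Hv].
           pose proof (rmatch_size _ _ _ _ Hv1). simpl in *; lia.
      * apply c_dynR.
    + apply c_dynL.
Qed.
Inductive st : ty -> ty -> Prop :=
  | st_arrL : forall A A' B, st A A' -> st (TArr A B) (TArr A' B)
  | st_arrR : forall A B B', st B B' -> st (TArr A B) (TArr A B')
  | st_all : forall K A A', st A A' -> st (TAll K A) (TAll K A')
  | st_rec : forall A A', st A A' -> st (TRec A) (TRec A')
  | st_vnt : forall A A', st A A' -> st (TVnt A) (TVnt A')
  | st_consL : forall l A A' r, st A A' -> st (TCons l A r) (TCons l A' r)
  | st_consR : forall l A r r', st r r' -> st (TCons l A r) (TCons l A r')
  | st_swap : forall l l' A B r, l <> l' ->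
      st (TCons l A (TCons l' B r)) (TCons l' B (TCons l A r)).

Lemma st_sym : forall A B, st A B -> st B A.
Proof. induction 1; constructor; auto. Qed.

Lemma st_tequiv : forall A B, st A B -> tequiv A B.
Proof. induction 1; constructor; auto; apply eq_refl_. Qed.

Lemma st_lift : forall A B, st A B -> forall c, st (lift c A) (lift c B).
Proof. induction 1; intros; simpl; constructor; auto. Qed.

Lemma st_cons : forall A B, st A B -> consistent A B.
Proof.
  induction 1.
  - apply c_arr; auto using c_refl.
  - apply c_arr; auto using c_refl.
  - apply c_all; auto.
  - apply c_rec; auto.
  - apply c_vnt; auto.
  - eapply c_consL; [constructor | auto | apply c_refl].
  - eapply c_consL; [constructor | apply c_refl | auto].
  - eapply c_consL; [ | apply c_refl | apply c_refl].
    constructor; [auto | constructor].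
Qed.

Definition isall (A : ty) : bool := match A with TAll _ _ => true | _ => false end.

Lemma tequiv_isall : forall A B, tequiv A B -> isall A = isall B.
Proof. induction 1; simpl; congruence. Qed.

Lemma tequiv_dyn : forall A B, tequiv A B -> (dyn_occurs A <-> dyn_occurs B).
Proof. induction 1; simpl; tauto. Qed.

Lemma tequiv_ends : forall A B, tequiv A B -> (ends_dyn A <-> ends_dyn B).
Proof. induction 1; simpl; tauto. Qed.

Lemma tequiv_rdom : forall A B, tequiv A B -> forall l, (In l (rdom A) <-> In l (rdom B)).
Proof. induction 1; intros; simpl; firstorder. Qed.

Lemma QPoly_iff : forall A, QPoly A <-> (isall A = false /\ dyn_occurs A).
Proof.
  intros A; unfold QPoly; split.
  - intros [H1 H2]; split; auto. destruct A; simpl; auto. exfalso; eapply H1; eauto.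
  - intros [H1 H2]; split; auto. intros K B E; subst; discriminate.
Qed.

Lemma tequiv_QPoly : forall A B, tequiv A B -> QPoly A -> QPoly B.
Proof.
  intros A B H HQ. rewrite QPoly_iff in *. destruct HQ.
  rewrite <- (tequiv_isall _ _ H). split; auto. apply (tequiv_dyn _ _ H); auto.
Qed.

Lemma cons_sym : forall A B, consistent A B -> consistent B A.
Proof.
  induction 1.
  - apply c_refl.
  - apply c_dynR.
  - apply c_dynL.
  - apply c_arr; auto.
  - apply c_all; auto.
  - apply c_allR; auto.
  - apply c_allL; auto.
  - apply c_rec; auto.
  - apply c_vnt; auto.
  - eapply c_consR; eauto.
  - eapply c_consL; eauto.
Qed.

Definition stq A B := A = B \/ st A B.

Lemma R1 : forall X l A r, rmatch X l A r -> forall X', st X X' ->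
  exists A' r', rmatch X' l A' r' /\ stq A A' /\ stq r r'.
Proof.
  induction 1; intros X' Hst.
  - inversion Hst; subst.
    + exists A', r. split; [constructor|]. unfold stq; auto.
    + exists A, r'. split; [constructor|]. unfold stq; auto.
    + do 2 eexists. split; [constructor; [auto | constructor] | unfold stq; auto].
  - inversion Hst; subst.
    + exists A, (TCons l' A' r'). split; [constructor; auto|].
      unfold stq; split; auto. right; constructor; auto.
    + destruct (IHrmatch _ H5) as [A1 [r1 [Hm [Ha Hr]]]].
      exists A1, (TCons l' B r1). split; [constructor; auto|]. split; auto.
      destruct Hr as [Hr|Hr]; [subst; left; auto | right; constructor; auto].
    + inversion H0; subst.
      * do 2 eexists. split; [constructor|]. unfold stq; auto.
      * exists A, (TCons l'0 B0 (TCons l' B r'0)). split.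
        -- constructor; auto. constructor; auto.
        -- unfold stq; split; auto. right; constructor; auto.
  - inversion Hst.
Qed.

Lemma cons_st_l : forall A B, consistent A B -> forall A', st A A' -> consistent A' B.
Proof.
  induction 1; intros A0 Hst.
  - apply cons_sym, st_cons, Hst.
  - inversion Hst.
  - apply c_dynR.
  - inversion Hst; subst; apply c_arr; auto.
  - inversion Hst; subst; apply c_all; auto.
  - inversion Hst; subst; apply c_allL; auto.
  - apply c_allR.
    + eapply tequiv_QPoly; [apply st_tequiv; exact Hst | auto].
    + apply IHconsistent, st_lift, Hst.
  - inversion Hst; subst; apply c_rec; auto.
  - inversion Hst; subst; apply c_vnt; auto.
  - inversion Hst; subst.
    + eapply c_consL; eauto.
    + eapply c_consL; eauto.
    + eapply (G _ _ _ (le_n _)); [ | exact H | exact H0 | exact H1].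
      constructor; [auto | constructor].
  - destruct (R1 _ _ _ _ H _ Hst) as [A1 [r1' [Hm [Ha Hr]]]].
    eapply c_consR; [exact Hm | |].
    + destruct Ha; [subst; auto | auto].
    + destruct Hr; [subst; auto | auto].
Qed.

Inductive star : ty -> ty -> Prop :=
  | star_refl : forall A, star A A
  | star_step : forall A B C, st A B -> star B C -> star A C.

Lemma star_trans : forall A B C, star A B -> star B C -> star A C.
Proof. induction 1; intros; eauto using star_step. Qed.

Lemma star_one : forall A B, st A B -> star A B.
Proof. intros; eapply star_step; eauto using star_refl. Qed.

Lemma star_sym : forall A B, star A B -> star B A.
Proof.
  induction 1; [apply star_refl|].
  eapply star_trans; [exact IHstar | apply star_one, st_sym; auto].
Qed.

Lemma star_ctx : forall (f : ty -> ty), (forall A B, st A B -> st (f A) (f B)) ->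
  forall A B, star A B -> star (f A) (f B).
Proof. intros f Hf; induction 1; [apply star_refl | eapply star_step; eauto]. Qed.

Lemma tequiv_star : forall A B, tequiv A B -> star A B.
Proof.
  induction 1.
  - apply star_refl.
  - apply star_sym; auto.
  - eapply star_trans; eauto.
  - eapply star_trans.
    + apply (star_ctx (fun X => TArr X A2)); [intros; constructor; auto | eauto].
    + apply (star_ctx (fun X => TArr B1 X)); [intros; constructor; auto | eauto].
  - apply (star_ctx (fun X => TAll K X)); [intros; constructor; auto | eauto].
  - apply (star_ctx TRec); [intros; constructor; auto | eauto].
  - apply (star_ctx TVnt); [intros; constructor; auto | eauto].
  - eapply star_trans.
    + apply (star_ctx (fun X => TCons l X r1)); [intros; constructor; auto | eauto].
    + apply (star_ctx (fun X => TCons l B X)); [intros; constructor; auto | eauto].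
  - apply star_one; constructor; auto.
Qed.

Lemma cons_star_l : forall A A', star A A' -> forall B, consistent A B -> consistent A' B.
Proof. induction 1; intros; auto. apply IHstar. eapply cons_st_l; eauto. Qed.

Lemma cons_star_r : forall B B', star B B' -> forall A, consistent A B -> consistent A B'.
Proof.
  intros B B' H A Hc. apply cons_sym. eapply cons_star_l; [exact H|]. apply cons_sym; auto.
Qed.

Lemma rmatch_dyn : forall r l, ~ In l (rdom r) -> ends_dyn r -> rmatch r l TDyn r.
Proof.
  induction r; simpl; intros l0 Hn He; try contradiction.
  - constructor.
  - constructor; [intro; subst; auto | apply IHr2; auto].
Qed.

Lemma sim_cons : forall A B, sim A B -> consistent A B.
Proof.
  induction 1.
  - apply c_refl.
  - apply c_dynL.
  - apply c_dynR.
  - apply c_arr; auto.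
  - apply c_all; auto.
  - apply c_allL; auto.
  - apply c_allR; auto.
  - apply c_rec; auto.
  - apply c_vnt; auto.
  - eapply c_consL; [constructor | auto | auto].
  - eapply c_consL; [apply rmatch_dyn; auto | apply c_dynR | auto].
  - eapply c_consR; [apply rmatch_dyn; auto | apply c_dynL | auto].
Qed.
Fixpoint lower (c : nat) (A : ty) : ty :=
  match A with
  | TVar n => if Nat.ltb c n then TVar (pred n) else TVar n
  | TName a => TName a
  | TDyn => TDyn
  | TBase i => TBase i
  | TArr A1 A2 => TArr (lower c A1) (lower c A2)
  | TAll K A1 => TAll K (lower (S c) A1)
  | TRec r => TRec (lower c r)
  | TVnt r => TVnt (lower c r)
  | TNil => TNil
  | TCons l A1 r => TCons l (lower c A1) (lower c r)
  end.

Fixpoint nofree (c : nat) (A : ty) : Prop :=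
  match A with
  | TVar n => n <> c
  | TArr A1 A2 => nofree c A1 /\ nofree c A2
  | TAll _ A1 => nofree (S c) A1
  | TRec r | TVnt r => nofree c r
  | TCons _ A1 r => nofree c A1 /\ nofree c r
  | _ => True
  end.

Lemma lower_lift : forall A c, lower c (lift c A) = A.
Proof.
  induction A; intros c; simpl; try (f_equal; auto; fail).
  destruct (Nat.leb c n) eqn:E; simpl.
  - apply Nat.leb_le in E. destruct (Nat.ltb c (S n)) eqn:E2; auto.
    apply Nat.ltb_ge in E2; lia.
  - apply Nat.leb_gt in E. destruct (Nat.ltb c n) eqn:E2; auto.
    apply Nat.ltb_lt in E2; lia.
Qed.

Lemma nofree_lift : forall A c, nofree c (lift c A).
Proof.
  induction A; intros c; simpl; auto.
  destruct (Nat.leb c n) eqn:E; simpl.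
  - apply Nat.leb_le in E; lia.
  - apply Nat.leb_gt in E; lia.
Qed.

Lemma lift_lower : forall A c, nofree c A -> lift c (lower c A) = A.
Proof.
  induction A; intros c H; simpl in *; try (f_equal; intuition; fail).
  destruct (Nat.ltb c n) eqn:E2; simpl.
  - apply Nat.ltb_lt in E2. destruct (Nat.leb c (pred n)) eqn:E; [f_equal; lia|].
    apply Nat.leb_gt in E; lia.
  - apply Nat.ltb_ge in E2. destruct (Nat.leb c n) eqn:E; auto.
    apply Nat.leb_le in E; lia.
Qed.

Lemma tequiv_nofree : forall A B, tequiv A B -> forall c, (nofree c A <-> nofree c B).
Proof. induction 1; intros; simpl; try firstorder. Qed.

Lemma tequiv_lower : forall A B, tequiv A B -> forall c, tequiv (lower c A) (lower c B).
Proof.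
  induction 1; intros; simpl.
  - apply eq_refl_.
  - apply eq_sym_; auto.
  - eapply eq_trans_; eauto.
  - apply eq_arr; auto.
  - apply eq_all; auto.
  - apply eq_rec; auto.
  - apply eq_vnt; auto.
  - apply eq_cons; auto.
  - apply eq_swap; auto.
Qed.

Lemma tequiv_lift_inv : forall X Y c, tequiv (lift c X) Y ->
  Y = lift c (lower c Y) /\ tequiv X (lower c Y).
Proof.
  intros X Y c H. split.
  - symmetry; apply lift_lower. apply (tequiv_nofree _ _ H). apply nofree_lift.
  - rewrite <- (lower_lift X c) at 1. apply tequiv_lower; auto.
Qed.

Lemma rmatch_tequiv : forall B l A r, rmatch B l A r ->
  tequiv B (TCons l A r) \/ (A = TDyn /\ r = B /\ ~ In l (rdom B) /\ ends_dyn B).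
Proof.
  induction 1.
  - left; apply eq_refl_.
  - destruct IHrmatch as [H1 | [H1 [H2 [H3 H4]]]].
    + left. eapply eq_trans_; [apply eq_cons; [apply eq_refl_ | exact H1] |].
      apply eq_swap; auto.
    + right; subst; simpl; repeat split; auto. intros [E|E]; auto.
  - right; simpl; auto.
Qed.

Ltac ctor := first [apply eq_refl_ | apply eq_arr | apply eq_all | apply eq_rec | apply eq_vnt | apply eq_cons
  | apply s_refl | apply s_dynL | apply s_dynR | apply s_arr | apply s_all | apply s_rec | apply s_vnt | apply s_cons].

Lemma fwd : forall A B, consistent A B ->
  exists A' B', tequiv A A' /\ sim A' B' /\ tequiv B' B.
Proof.
  induction 1.
  - exists A, A; repeat split; ctor.
  - exists TDyn, A; repeat split; ctor.
  - exists A, TDyn; repeat split; ctor.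
  - destruct IHconsistent1 as [a1 [b1 [Ha [Hs Hb]]]].
    destruct IHconsistent2 as [a2 [b2 [Ha2 [Hs2 Hb2]]]].
    exists (TArr a1 a2), (TArr b1 b2); repeat split; ctor; auto.
  - destruct IHconsistent as [a1 [b1 [Ha [Hs Hb]]]].
    exists (TAll K a1), (TAll K b1); repeat split; ctor; auto.
  - destruct IHconsistent as [a1 [b1 [Ha [Hs Hb]]]].
    destruct (tequiv_lift_inv B b1 0 (eq_sym_ _ _ Hb)) as [E Hb'].
    exists (TAll K a1), (lower 0 b1); repeat split.
    + ctor; auto.
    + apply s_allL; [eapply tequiv_QPoly; eauto | rewrite <- E; auto].
    + apply eq_sym_; auto.
  - destruct IHconsistent as [a1 [b1 [Ha [Hs Hb]]]].
    destruct (tequiv_lift_inv A a1 0 Ha) as [E Ha'].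
    exists (lower 0 a1), (TAll K b1); repeat split.
    + auto.
    + apply s_allR; [eapply tequiv_QPoly; eauto | rewrite <- E; auto].
    + ctor; auto.
  - destruct IHconsistent as [a1 [b1 [Ha [Hs Hb]]]].
    exists (TRec a1), (TRec b1); repeat split; ctor; auto.
  - destruct IHconsistent as [a1 [b1 [Ha [Hs Hb]]]].
    exists (TVnt a1), (TVnt b1); repeat split; ctor; auto.
  - destruct IHconsistent1 as [a1 [b1 [Ha [Hs Hb]]]].
    destruct IHconsistent2 as [a2 [b2 [Ha2 [Hs2 Hb2]]]].
    destruct (rmatch_tequiv _ _ _ _ H) as [HB | [E1 [E2 [Hn Hd]]]].
    + exists (TCons l a1 a2), (TCons l b1 b2); repeat split.
      * ctor; auto.
      * ctor; auto.
      * eapply eq_trans_; [apply eq_cons; eauto | apply eq_sym_; auto].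
    + subst. exists (TCons l A a2), b2; repeat split; auto.
      * ctor; [apply eq_refl_ | auto].
      * apply s_consL; auto.
        -- intro Hi. apply Hn. apply (tequiv_rdom _ _ Hb2); auto.
        -- apply (tequiv_ends _ _ Hb2); auto.
  - destruct IHconsistent1 as [a1 [b1 [Ha [Hs Hb]]]].
    destruct IHconsistent2 as [a2 [b2 [Ha2 [Hs2 Hb2]]]].
    destruct (rmatch_tequiv _ _ _ _ H) as [HA | [E1 [E2 [Hn Hd]]]].
    + exists (TCons l a1 a2), (TCons l b1 b2); repeat split.
      * eapply eq_trans_; [exact HA | apply eq_cons; auto].
      * ctor; auto.
      * ctor; auto.
    + subst. exists a2, (TCons l B b2); repeat split; auto.
      * apply s_consR; auto.
        -- intro Hi. apply Hn. apply (tequiv_rdom _ _ Ha2); auto.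
        -- apply (tequiv_ends _ _ Ha2); auto.
      * ctor; [apply eq_refl_ | auto].
Qed.

Theorem mainTheorem1 : forall A B : ty,
  consistent A B <->
  exists A' B' : ty, tequiv A A' /\ sim A' B' /\ tequiv B' B.
Proof.
  intros A B; split.
  - apply fwd.
  - intros [A' [B' [H1 [H2 H3]]]].
    apply (cons_star_r B'); [apply tequiv_star; auto|].
    apply (cons_star_l A'); [apply star_sym, tequiv_star; auto|].
    apply sim_cons; auto.
Qed.
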